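(* Under the hypotheses of Proposition 2.1 (both singular and invertible components, $P$ primitive), the Markov operator $\mathcal{Q}$ is uniformly ergodic: there exist constants $C<\infty$ and $a>0$ such that for every $\mathcal{Q}$-stationary probability measure $\eta$, every $n\in\mathbb{N}$ and every $\varphi\in L^\infty(\mathscr{A}\times\mathbb{P}^1)$, $$\Big\|\mathcal{Q}^n\varphi-\int\varphi\,d\eta\Big\|_\infty\le C e^{-an}\|\varphi\|_\infty.$$
   Context: $\mathscr{A}=\{1,\dots,k\}=\mathscr{A}_{\mathrm{sing}}\sqcup\mathscr{A}_{\mathrm{inv}}$, both nonempty; $\underline A=(A_i)$ with $\mathrm{rank}A_i=1$ on $\mathscr{A}_{\mathrm{sing}}$ and $\mathrm{rank}A_i=2$ on $\mathscr{A}_{\mathrm{inv}}$. $P=(p_{ij})$ primitive left stochastic ($p_{ij}$ = probability of $j\to i$) with stationary vector $q$. Projective action: $\hat A\hat v=\widehat{Av}$ for invertible $A$, and for rank one $A$ the constant map to $\hat r$, $r=\mathrm{Range}(A)$. $L^\infty(\mathscr{A}\times\mathbb{P}^1)$: bounded measurable functions with sup norm. $(\mathcal{Q}\varphi)(j,\hat v)=\sum_i\varphi(i,\hat A_i\hat v)p_{ij}$; $\eta$ is $\mathcal{Q}$-stationary if $\int\mathcal{Q}\varphi\,d\eta=\int\varphi\,d\eta$ for all such $\varphi$. *)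

(* Defs.v *)
From HB Require Import structures.
From mathcomp Require Import all_boot all_order all_algebra.
From mathcomp Require Import all_classical all_reals all_analysis.
Set Implicit Arguments. Unset Strict Implicit. Unset Printing Implicit Defensive.
Import Order.TTheory GRing.Theory Num.Theory.
Local Open Scope classical_set_scope.
Local Open Scope ring_scope.

(* The projective line P^1(R) is parametrized by the angle theta in [0, pi):
   theta <-> the line spanned by (cos theta, sin theta). *)
Definition P1set {R : realType} : set R := `[0, pi[%classic.

(* the angle in [0,pi) of the line through the nonzero vector (x, y) *)
Definition lineang {R : realType} (x y : R) : R :=
  if y == 0 then 0 else pi / 2 - atan (x / y).

Definition unitv {R : realType} (th : R) : 'cV[R]_2 :=
  \col_(i < 2) (if i == ord0 then cos th else sin th).

Definition vang {R : realType} (v : 'cV[R]_2) : R :=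
  lineang (v ord0 ord0) (v ord_max ord0).

(* a nonzero vector spanning Range(A) when rank A = 1 *)
Definition rangevec {R : realType} (A : 'M[R]_2) : 'cV[R]_2 :=
  if col ord0 A != 0 then col ord0 A else col ord_max A.

(* projective action: A^ v^ = (A v)^ for invertible A, and the constant map to
   r^ (r = Range A) for rank one A *)
Definition pact {R : realType} (A : 'M[R]_2) (th : R) : R :=
  if \rank A == 2%N then vang (A *m unitv th) else vang (rangevec A).

Definition Qop {R : realType} (k : nat) (P : 'M[R]_k) (A : 'I_k -> 'M[R]_2)
  (phi : 'I_k -> R -> R) : 'I_k -> R -> R :=
  fun j th => \sum_(i < k) phi i (pact (A i) th) * P i j.

Definition Linf_fun {R : realType} (k : nat) (phi : 'I_k -> R -> R) : Prop :=
  (forall i, measurable_fun P1set (phi i)) /\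
  exists M : R, forall i th, P1set th -> `|phi i th| <= M.

Definition supnorm {R : realType} (k : nat) (phi : 'I_k -> R -> R) : R :=
  sup [set r | exists i th, P1set th /\ r = `|phi i th|].

(* a (finite) measure on A x P^1 given by its restrictions eta_i to {i} x P^1 *)
Definition integ {R : realType} (k : nat) (eta : 'I_k -> {measure set R -> \bar R})
  (phi : 'I_k -> R -> R) : \bar R :=
  (\sum_(i < k) \int[eta i]_(x in P1set) (phi i x)%:E)%E.

Definition is_prob {R : realType} (k : nat) (eta : 'I_k -> {measure set R -> \bar R}) :=
  (forall i, eta i (~` P1set) = 0%E) /\ (\sum_(i < k) eta i P1set)%E = 1%E.

Definition Q_stationary {R : realType} (k : nat) (P : 'M[R]_k) (A : 'I_k -> 'M[R]_2)
  (eta : 'I_k -> {measure set R -> \bar R}) : Prop :=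
  forall phi, Linf_fun phi -> integ eta (Qop P A phi) = integ eta phi.

(* p_ij = probability of j -> i: columns sum to 1 *)
Definition left_stochastic {R : realType} (k : nat) (P : 'M[R]_k) : Prop :=
  (forall i j, 0 <= P i j) /\ (forall j, \sum_(i < k) P i j = 1).

Definition mxpow {R : realType} (k : nat) (P : 'M[R]_k) (m : nat) : 'M[R]_k :=
  iter m (mulmx P) 1%:M.

Definition primitive {R : realType} (k : nat) (P : 'M[R]_k) : Prop :=
  exists m : nat, forall i j, 0 < mxpow P m i j.

(* Main.v *)
Require Import Defs.
From HB Require Import structures.
From mathcomp Require Import all_boot all_order all_algebra.
From mathcomp Require Import all_classical all_reals all_analysis.
From mathcomp Require Import ring lra.
Import Order.TTheory GRing.Theory Num.Theory.
Local Open Scope classical_set_scope.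
Local Open Scope ring_scope.
Set Implicit Arguments. Unset Strict Implicit. Unset Printing Implicit Defensive.

Lemma closed0 (R : realType) : closed ([set 0] : set R).
Proof. apply: accessible_closed_set1. apply: hausdorff_accessible. exact: Rhausdorff. Qed.

Lemma meas_inv (R : realType) : measurable_fun [set r : R | r != 0] GRing.inv.
Proof.
have o : open ([set r | r != 0] : set R).
  have -> : ([set r | r != 0] : set R) = ~` [set 0].
    by apply/funext => r; apply/propext; rewrite /setC /=; split => /eqP.
  exact: closed_openC (@closed0 R).
apply: (measurable_realfun.open_continuous_measurable_fun o).
move=> r; rewrite inE /= => r0. exact: inv_continuous.
Qed.

Lemma P1setE (R : realType) (t : R) : P1set t = (0 <= t < pi).
Proof. by rewrite /P1set /= in_itv /=. Qed.

Lemma mP1 (R : realType) : measurable (@P1set R).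
Proof. exact: measurable_itv. Qed.

Lemma lineang_in (R : realType) (x y : R) : P1set (lineang x y).
Proof.
rewrite P1setE /lineang; case: eqP => _; first by rewrite lexx pi_gt0.
have h1 := atan_gtNpi2 (x / y); have h2 := atan_ltpi2 (x / y).
have h3 := @pi_gt0 R.
apply/andP; split; lra.
Qed.

Lemma pact_in (R : realType) (A : 'M[R]_2) th : P1set (pact A th).
Proof. rewrite /pact /vang; case: ifP => _; exact: lineang_in. Qed.

Lemma meas_lineang (R : realType) (x y : R -> R) :
  measurable_fun setT x -> measurable_fun setT y ->
  measurable_fun setT (fun t => lineang (x t) (y t)).
Proof.
move=> mx my; rewrite /lineang.
apply: measurable_fun_if => //;
  try (by apply: measurable_realfun.measurable_fun_eqr => //); try exact: measurable_cst.
  apply: measurable_realfun.measurable_funB; first exact: measurable_cst.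
  apply: measurableT_comp; first exact: (measurable_realfun.continuous_measurable_fun (fun x => @continuous_atan R x)).
  apply: measurable_realfun.measurable_funM; first exact: measurable_funS mx.
  apply: (measurable_comp (F := [set r : R | r != 0])).
  + rewrite (_ : [set r : R | r != 0] = ~` [set 0]).
      by apply: measurableC; exact: measurable_set1.
    by apply/funext => r; apply/propext; rewrite /setC /=; split => /eqP.
  + by move=> _ [t [_ /= /negbT yt] <-].
  + exact: meas_inv.
  + exact: measurable_funS my.
Qed.

Lemma meas_row (R : realType) (A : 'M[R]_2) r :
  measurable_fun setT (fun t => (A *m unitv t) r ord0).
Proof.
rewrite (_ : (fun t => _) = fun t => \sum_(l < 2) A r l * unitv t l ord0).
  apply: measurable_sum => l; apply: measurable_realfun.measurable_funM;
    first exact: measurable_cst.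
  rewrite /unitv; under eq_fun do rewrite mxE.
  case: (l == ord0); apply: measurable_realfun.continuous_measurable_fun;
    [exact: continuous_cos | exact: continuous_sin].
by apply/funext => t; rewrite mxE.
Qed.

Lemma meas_pact (R : realType) (A : 'M[R]_2) : measurable_fun P1set (pact A).
Proof.
apply: measurable_funTS; rewrite /pact; case: (\rank A == 2%N); last exact: measurable_cst.
rewrite /vang; apply: meas_lineang; exact: meas_row.
Qed.

Lemma Q_affine (R : realType) k (P : 'M[R]_k) A (hs : forall j, \sum_(i < k) P i j = 1)
  (a b : R) f :
  Qop P A (fun i t => a * f i t + b) = fun j th => a * Qop P A f j th + b.
Proof.
apply/funext => j; apply/funext => th; rewrite /Qop.
under eq_bigr do rewrite mulrDl -mulrA.
by rewrite big_split /= -mulr_sumr -mulr_sumr hs mulr1.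
Qed.

Lemma iter_affine (R : realType) k (P : 'M[R]_k) A (hs : forall j, \sum_(i < k) P i j = 1)
  (a b : R) f n :
  iter n (Qop P A) (fun i t => a * f i t + b) =
  fun j th => a * iter n (Qop P A) f j th + b.
Proof. by elim: n => [//|n IH]; rewrite /= IH Q_affine. Qed.

Lemma Q_bounds (R : realType) k (P : 'M[R]_k) A (hP : left_stochastic P) (a b : R) f :
  (forall i t, P1set t -> a <= f i t <= b) ->
  forall j t, P1set t -> a <= Qop P A f j t <= b.
Proof.
case: hP => hp hs hf j t _; rewrite /Qop.
have ea : a = \sum_(i < k) a * P i j by rewrite -mulr_sumr hs mulr1.
have eb : b = \sum_(i < k) b * P i j by rewrite -mulr_sumr hs mulr1.
apply/andP; split.
  rewrite [X in X <= _]ea; apply: ler_sum => i _; apply: ler_wpM2r => //.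
  by case/andP: (hf i _ (@pact_in R (A i) t)).
rewrite [X in _ <= X]eb; apply: ler_sum => i _; apply: ler_wpM2r => //.
by case/andP: (hf i _ (@pact_in R (A i) t)).
Qed.

Lemma iter_bounds (R : realType) k (P : 'M[R]_k) A (hP : left_stochastic P) (a b : R) f n :
  (forall i t, P1set t -> a <= f i t <= b) ->
  forall j t, P1set t -> a <= iter n (Qop P A) f j t <= b.
Proof.
move=> hf; elim: n => [//|n IH] /=; exact: Q_bounds.
Qed.

Lemma Linf_Q (R : realType) k (P : 'M[R]_k) A (hP : left_stochastic P) f :
  Linf_fun f -> Linf_fun (Qop P A f).
Proof.
case=> mf [M hM]; split.
  move=> j; rewrite /Qop; apply: measurable_sum => i.
  apply: measurable_realfun.measurable_funM; last exact: measurable_cst.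
  apply: (measurable_comp (F := P1set)); first exact: mP1.
  - by move=> _ [t _ <-]; exact: pact_in.
  - exact: mf.
  - exact: meas_pact.
exists M => j t Pt; rewrite ler_norml; apply: (Q_bounds A hP) => // i s Ps.
by rewrite -ler_norml; exact: hM.
Qed.

Lemma Linf_iter (R : realType) k (P : 'M[R]_k) A (hP : left_stochastic P) f n :
  Linf_fun f -> Linf_fun (iter n (Qop P A) f).
Proof. by move=> hf; elim: n => [//|n IH] /=; exact: Linf_Q. Qed.

Lemma mxpowSr (R : realType) k (P : 'M[R]_k) n : mxpow P n.+1 = mxpow P n *m P.
Proof.
elim: n => [|n IH]; first by rewrite /mxpow /= mulmx1 mul1mx.
change (P *m mxpow P n.+1 = mxpow P n.+1 *m P).
by rewrite {1}IH mulmxA.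
Qed.

Lemma pact_sing (R : realType) (A : 'M[R]_2) th : \rank A != 2%N ->
  pact A th = pact A 0.
Proof. by move=> h; rewrite /pact (negbTE h). Qed.

Lemma minor (R : realType) k (P : 'M[R]_k) A (hP : left_stochastic P) s
  (hs : \rank (A s) != 2%N) f (f0 : forall i t, P1set t -> 0 <= f i t) n j t :
  P1set t -> mxpow P n.+1 s j * f s (pact (A s) 0) <= iter n.+1 (Qop P A) f j t.
Proof.
case: hP => hp hsum.
elim: n j t => [|n IH] j t Pt.
  rewrite /mxpow /= mulmx1 /Qop (bigD1 s) //= -(pact_sing t hs) mulrC.
  rewrite lerDl; apply: sumr_ge0 => i _; apply: mulr_ge0 => //.
  exact: f0 (pact_in _ _).
rewrite iterS {2}/Qop mxpowSr mxE mulr_suml.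
apply: ler_sum => i _; rewrite mulrAC; apply: ler_wpM2r => //.
exact: IH (pact_in _ _).
Qed.

Lemma contract (R : realType) k (P : 'M[R]_k) A (hP : left_stochastic P) s
  (hs : \rank (A s) != 2%N) m (d : R) (d0 : 0 <= d)
  (hd : forall j, d <= mxpow P m.+1 s j) (a b : R) f :
  (forall i t, P1set t -> a <= f i t <= b) ->
  forall j t, P1set t ->
    a + d * (f s (pact (A s) 0) - a) <= iter m.+1 (Qop P A) f j t <=
    b - d * (b - f s (pact (A s) 0)).
Proof.
move=> hf j t Pt.
have hs' := hP; case: hs' => hp hsum.
set c := f s (pact (A s) 0).
have /andP[ac cb] : a <= c <= b by exact: hf (pact_in _ _).
have L := @minor R k P A hP s hs (fun i t => 1 * f i t + - a)
  ltac:(by move=> i u Pu; case/andP: (hf i u Pu) => ? ?; lra) m j t Pt.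
have U := @minor R k P A hP s hs (fun i t => (-1) * f i t + b)
  ltac:(by move=> i u Pu; case/andP: (hf i u Pu) => ? ?; lra) m j t Pt.
rewrite iter_affine // in L; rewrite iter_affine // in U.
cbv beta in L; cbv beta in U; rewrite !mul1r in L; rewrite !mulN1r in U.
have U2 : mxpow P m.+1 s j * (b - c) <= b - iter m.+1 (Qop P A) f j t.
  by move: U; rewrite [- c + _]addrC [- _ + b]addrC.
have h1 : d * (c - a) <= mxpow P m.+1 s j * (c - a) by apply: ler_wpM2r; rewrite ?subr_ge0.
have h2 : d * (b - c) <= mxpow P m.+1 s j * (b - c) by apply: ler_wpM2r; rewrite ?subr_ge0.
apply/andP; split.
  have L2: mxpow P m.+1 s j * (c - a) <= iter m.+1 (Qop P A) f j t - a by [].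
  lra.
lra.
Qed.

Lemma contract_iter (R : realType) k (P : 'M[R]_k) A (hP : left_stochastic P) s
  (hs : \rank (A s) != 2%N) m (d : R) (d0 : 0 <= d)
  (hd : forall j, d <= mxpow P m.+1 s j) q : forall (a b : R) f,
  (forall i t, P1set t -> a <= f i t <= b) ->
  exists a' b' : R, b' - a' = (1 - d) ^+ q * (b - a) /\
    forall j t, P1set t -> a' <= iter (q * m.+1) (Qop P A) f j t <= b'.
Proof.
elim: q => [|q IH] a b f hf.
  by exists a, b; rewrite expr0 mul1r; split.
have [a' [b' [eab hab]]] := IH a b f hf.
exists (a' + d * (iter (q * m.+1) (Qop P A) f s (pact (A s) 0) - a')),
       (b' - d * (b' - iter (q * m.+1) (Qop P A) f s (pact (A s) 0))).
split.
  rewrite exprS -mulrA -eab; ring.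
move=> j t Pt; rewrite mulSn iterD.
exact: (contract hP hs d0 hd hab).
Qed.

Lemma bdd_int (R : realType) (mu : {measure set R -> \bar R}) (g : R -> R) (M : R) :
  (mu P1set < +oo)%E -> measurable_fun P1set g ->
  (forall x, P1set x -> `|g x| <= M) -> mu.-integrable P1set (EFin \o g).
Proof.
move=> fin mg h; apply: measurable_bounded_integrable => //; first exact: mP1.
exists M; split; first exact: num_real.
move=> N MN x Px; apply: le_trans (h x Px) (ltW MN).
Qed.

Lemma integ_bounds (R : realType) k (eta : 'I_k -> {measure set R -> \bar R})
  (heta : is_prob eta) f (a b : R) :
  Linf_fun f -> (forall i t, P1set t -> a <= f i t <= b) ->
  a <= fine (integ eta f) <= b.
Proof.
case: heta => _ hsum [mf [M hM]] hf.
have le1 i : (eta i P1set <= 1)%E.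
  rewrite -hsum (bigD1 i) //=; rewrite leeDl //.
  by apply: sume_ge0 => l _; exact: measure_ge0.
have fin i : (eta i P1set < +oo)%E by exact: le_lt_trans (le1 i) (ltey _).
have finn i : eta i P1set \is a fin_num.
  by rewrite ge0_fin_numE ?measure_ge0.
pose e i := fine (eta i P1set).
have ee i : eta i P1set = (e i)%:E by rewrite fineK.
have int_i i : (eta i).-integrable P1set (EFin \o f i) := bdd_int (fin i) (mf i) (hM i).
have intc (c : R) i : (eta i).-integrable P1set (EFin \o cst c).
  by apply: (@bdd_int _ _ _ `|c|) => //; exact: measurable_cst.
pose r i := fine (\int[eta i]_(x in P1set) (f i x)%:E)%E.
have rr i : (\int[eta i]_(x in P1set) (f i x)%:E)%E = (r i)%:E.
  by rewrite fineK //; apply: integrable_fin_num => //; try exact: mP1; try exact: int_i.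
have lo i : a * e i <= r i.
  rewrite -lee_fin -rr EFinM -ee -integral_cst; last exact: mP1.
  apply: le_integral => //; try exact: (intc a i); try exact: (intc b i); try exact: int_i; try exact: mP1.
  by move=> x; rewrite inE => Px; rewrite /= lee_fin; case/andP: (hf i x Px).
have hi i : r i <= b * e i.
  rewrite -lee_fin -rr EFinM -ee -integral_cst; last exact: mP1.
  apply: le_integral => //; try exact: (intc a i); try exact: (intc b i); try exact: int_i; try exact: mP1.
  by move=> x; rewrite inE => Px; rewrite /= lee_fin; case/andP: (hf i x Px).
have se : \sum_(i < k) e i = 1.
  by move: hsum; under eq_bigr do rewrite ee; rewrite sumEFin => -[].
rewrite /integ; under eq_bigr do rewrite rr; rewrite sumEFin /=.
apply/andP; split.
  rewrite -[a]mulr1 -se mulr_sumr; apply: ler_sum => i _; exact: lo.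
rewrite -[b]mulr1 -se mulr_sumr; apply: ler_sum => i _; exact: hi.
Qed.

Lemma stat_iter (R : realType) k (P : 'M[R]_k) A (hP : left_stochastic P)
  (eta : 'I_k -> {measure set R -> \bar R}) (hst : Q_stationary P A eta) f n :
  Linf_fun f -> integ eta (iter n (Qop P A) f) = integ eta f.
Proof.
move=> hf; elim: n => [//|n IH] /=.
by rewrite hst ?IH //; exact: Linf_iter.
Qed.

Lemma pos_lb (R : realType) k (x : 'I_k -> R) (s : 'I_k) :
  (forall j, 0 < x j) -> exists d : R, 0 < d /\ d <= 2^-1 /\ forall j, d <= x j.
Proof.
move=> hx.
have hS : 0 < \sum_(j < k) (x j)^-1.
  rewrite (bigD1 s) //=; apply: ltr_wpDr; last by rewrite invr_gt0.
  by apply: sumr_ge0 => j _; rewrite invr_ge0 ltW.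
exists (Num.min (\sum_(j < k) (x j)^-1)^-1 2^-1); split; last split.
- by rewrite lt_min invr_gt0 hS invr_gt0 ltr0n.
- by rewrite ge_min lexx orbT.
- move=> j; rewrite ge_min; apply/orP; left.
  rewrite -[x j]invrK lef_pV2 ?posrE ?invr_gt0 //.
  rewrite (bigD1 j) //= lerDl; apply: sumr_ge0 => l _; by rewrite invr_ge0 ltW.
Qed.

Theorem theorem2p1 (R : realType) (k : nat) (A : 'I_k -> 'M[R]_2) (P : 'M[R]_k) :
  (forall i, \rank (A i) = 1%N \/ \rank (A i) = 2%N) ->
  (exists i, \rank (A i) = 1%N) ->
  (exists i, \rank (A i) = 2%N) ->
  left_stochastic P -> primitive P ->
  exists C a : R, 0 < a /\
    forall eta : 'I_k -> {measure set R -> \bar R},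
      is_prob eta -> Q_stationary P A eta ->
      forall (n : nat) (phi : 'I_k -> R -> R), Linf_fun phi ->
        forall j th, P1set th ->
          `|iter n (Qop P A) phi j th - fine (integ eta phi)|
            <= C * expR (- (a * n%:R)) * supnorm phi.
Proof.
move=> hr [s hs1] [v hv2] hP [m hm].
have hs : \rank (A s) != 2%N by rewrite hs1.
have sv : s != v by apply/eqP => e; move: hs1; rewrite e hv2.
have m0 : m <> 0%N.
  move=> m0; move: (hm s v); rewrite m0 /mxpow /= mxE (negbTE sv) /=.
  by rewrite ltxx.
case: m hm m0 => [//|m'] hm _.
have [d [d0 [dh hd]]] := pos_lb s (hm s).
set rho := 1 - d.
have rho0 : 0 < rho by rewrite /rho; have := @invr_gt0 R 2; lra.
have rho1 : rho < 1 by rewrite /rho; lra.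
have lnr : ln rho < 0 by apply: ln_lt0; rewrite rho0 rho1.
exists (2 / rho), (- ln rho / m'.+1%:R); split.
  by apply: divr_gt0; rewrite ?oppr_gt0 ?ltr0n.
move=> eta heta hst n phi hphi j th Pth.
set Mp := supnorm phi.
have hE : has_ubound [set r | exists i th, P1set th /\ r = `|phi i th|].
  case: hphi => _ [M hM]; exists M => _ [i' [t' [Pt' ->]]]; exact: hM.
have hb : forall i t, P1set t -> - Mp <= phi i t <= Mp.
  move=> i t Pt; rewrite -ler_norml; apply: (ub_le_sup hE).
  by exists i, t.
have Mp0 : 0 <= Mp by have := hb s th Pth; case/andP => ? ?; lra.
set q := (n %/ m'.+1)%N; set r := (n %% m'.+1)%N.
have en : n = (q * m'.+1 + r)%N by exact: divn_eq.
have hpsi := @iter_bounds R k P A hP (- Mp) Mp phi r hb.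
have [a' [b' [eab hab]]] := contract_iter hP hs (ltW d0) hd q hpsi.
have hI : a' <= fine (integ eta phi) <= b'.
  rewrite -(stat_iter hP hst n hphi) en iterD.
  apply: integ_bounds => //; by do 2 apply: Linf_iter => //.
have hx := hab j th Pth.
rewrite {1}en iterD.
apply: le_trans (_ : b' - a' <= _).
  rewrite ler_norml; case/andP: hx => ? ?; case/andP: hI => ? ?.
  apply/andP; split; lra.
rewrite eab -/rho.
have e1 : rho ^+ q * (Mp - - Mp) = 2 / rho * rho ^+ q.+1 * Mp.
  have rn : rho != 0 by rewrite gt_eqF.
  rewrite exprS mulrA divfK // opprK.
  by rewrite -[Mp + Mp]mulr2n mulrnAr -mulr_natl mulrA [_ * rho ^+ q]mulrC.
rewrite e1; apply: ler_wpM2r => //; apply: ler_wpM2l.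
  by apply: divr_ge0; lra.
have -> : rho ^+ q.+1 = expR (q.+1%:R * ln rho) by rewrite expRM_natl lnK ?posrE.
rewrite ler_expR.
have nle : (n < q.+1 * m'.+1)%N by exact: ltn_ceil.
have nle' : n%:R / m'.+1%:R <= q.+1%:R :> R.
  rewrite ler_pdivrMr ?ltr0n // -natrM ler_nat; exact: ltnW.
have hM : 0 < m'.+1%:R :> R by rewrite ltr0n.
have -> : - (- ln rho / m'.+1%:R * n%:R) = ln rho * (n%:R / m'.+1%:R).
  by rewrite !mulNr opprK mulrAC -mulrA.
rewrite mulrC -subr_ge0 -mulrBr; apply: mulr_le0; [exact: ltW lnr | by rewrite subr_le0].
Qed.
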